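(* Let $\mathcal{X}$ be a non-empty set, $\mathcal{B}\subseteq\mathcal{P}(\mathcal{X})\setminus\{\emptyset\}$ and $g\in\mathcal{G}_{\geq0}(\mathcal{X})$. If, for every non-negative rational $r$, the set $\{x\in\mathcal{X}\colon g(x)\geq r\}$ is a finite union of pairwise disjoint events in $\mathcal{B}\cup\{\mathcal{X},\emptyset\}$, then $g$ is $\mathcal{B}$-measurable.
   Context: $\mathcal{G}_{\geq0}(\mathcal{X})$ is the set of bounded non-negative real functions on $\mathcal{X}$; $\mathbb{I}_B$ is the indicator of $B$. A function $g\in\mathcal{G}_{\geq0}(\mathcal{X})$ is simple $\mathcal{B}$-measurable if there are $c_0\geq0$, $n\in\mathbb{N}\cup\{0\}$ and, for $k=1,\dots,n$, $c_k\geq0$ and $B_k\in\mathcal{B}$ with $g=c_0+\sum_{k=1}^nc_k\mathbb{I}_{B_k}$. A function $g\in\mathcal{G}_{\geq0}(\mathcal{X})$ is $\mathcal{B}$-measurable if there is a sequence $(g_n)_{n\in\mathbb{N}}$ of simple $\mathcal{B}$-measurable functions in $\mathcal{G}_{\geq0}(\mathcal{X})$ with $\lim_{n\to\infty}\sup_{x}|g(x)-g_n(x)|=0$. *)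

(* Defs.v *)
From HB Require Import structures.
From mathcomp Require Import all_boot all_order all_algebra.
From mathcomp Require Import all_classical all_reals all_analysis.
Set Implicit Arguments. Unset Strict Implicit. Unset Printing Implicit Defensive.
Import Order.TTheory GRing.Theory Num.Theory.
Import numFieldNormedType.Exports.
Local Open Scope classical_set_scope.
Local Open Scope ring_scope.

(* G_{>=0}(X): bounded non-negative real functions on X. *)
Definition bnn (R : realType) (X : Type) (g : X -> R) : Prop :=
  (forall x, 0 <= g x) /\ (exists M : R, forall x, g x <= M).

Definition simple_meas (R : realType) (X : Type) (B : set (set X)) (g : X -> R) : Prop :=
  bnn g /\
  exists (c0 : R) (n : nat) (c : 'I_n -> R) (Bk : 'I_n -> set X),
    0 <= c0 /\ (forall k, 0 <= c k) /\ (forall k, B (Bk k)) /\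
    g = (fun x => c0 + \sum_(k < n) c k * \1_(Bk k) x).

Definition B_meas (R : realType) (X : Type) (B : set (set X)) (g : X -> R) : Prop :=
  bnn g /\
  exists gn : nat -> X -> R,
    (forall n, simple_meas B (gn n)) /\
    (fun n => sup [set `|g x - gn n x| | x in [set: X]]) @ \oo --> (0 : R).

(* Main.v *)
Require Import Defs.
From HB Require Import structures.
From mathcomp Require Import all_boot all_order all_algebra.
From mathcomp Require Import all_classical all_reals all_analysis.
Import Order.TTheory GRing.Theory Num.Theory.
Import numFieldNormedType.Exports.
Local Open Scope classical_set_scope.
Local Open Scope ring_scope.
Set Implicit Arguments. Unset Strict Implicit.

Section S.
Variables (R : realType) (X : Type) (B : set (set X)).

Definition SS (f : X -> R) := exists (c0 : R) (n : nat) (c : 'I_n -> R) (Bk : 'I_n -> set X),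
    0 <= c0 /\ (forall k, 0 <= c k) /\ (forall k, B (Bk k)) /\
    f = (fun x => c0 + \sum_(k < n) c k * \1_(Bk k) x).

Lemma SS_cst c : 0 <= c -> SS (fun _ => c).
Proof.
move=> c0; exists c, 0%N, (fun _ => 0), (fun _ => set0); do !split => //; try by case.
by apply/funext => x; rewrite big_ord0 addr0.
Qed.

Lemma SS_add f h : SS f -> SS h -> SS (fun x => f x + h x).
Proof.
move=> [c0 [n1 [c1 [B1 [h0 [h1 [h2 ->]]]]]]] [d0 [n2 [d1 [B2 [k0 [k1 [k2 ->]]]]]]].
pose c (k : 'I_(n1 + n2)) := match fintype.split k with inl i => c1 i | inr j => d1 j end.
pose Bk (k : 'I_(n1 + n2)) := match fintype.split k with inl i => B1 i | inr j => B2 j end.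
exists (c0 + d0), (n1 + n2)%N, c, Bk; split; first exact: addr_ge0.
split; first by move=> k; rewrite /c; case: (fintype.split k).
split; first by move=> k; rewrite /Bk; case: (fintype.split k).
have El (i : 'I_n1) : fintype.split (lshift n2 i) = inl i by exact: (unsplitK (inl i)).
have Er (i : 'I_n2) : fintype.split (rshift n1 i) = inr i by exact: (unsplitK (inr i)).
apply/funext => x; rewrite big_split_ord addrACA.
congr (_ + (_ + _)); apply: eq_bigr => i _.
  by rewrite /c /Bk El.
by rewrite /c /Bk Er.
Qed.

Lemma SS_scale a f : 0 <= a -> SS f -> SS (fun x => a * f x).
Proof.
move=> a0 [c0 [n [c [Bk [h0 [h1 [h2 ->]]]]]]].
exists (a * c0), n, (fun k => a * c k), Bk; do !split => //.
- exact: mulr_ge0.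
- by move=> k; apply: mulr_ge0.
- by apply/funext => x; rewrite mulrDr mulr_sumr; under eq_bigr do rewrite mulrA.
Qed.

Lemma SS_sum n (F : 'I_n -> X -> R) : (forall i, SS (F i)) ->
  SS (fun x => \sum_(i < n) F i x).
Proof.
elim: n F => [|n IH] F HF.
  by under eq_fun do rewrite big_ord0; exact: SS_cst.
under eq_fun do rewrite big_ord_recr /=.
by apply: SS_add => //; apply: (IH (fun i => F (widen_ord (leqnSn n) i))).
Qed.

Lemma SS_ind A : B A \/ A = [set: X] \/ A = set0 -> SS (\1_A).
Proof.
case=> [BA|[->|->]].
- exists 0, 1%N, (fun _ => 1), (fun _ => A); do !split => //.
  by apply/funext => x; rewrite big_ord1 add0r mul1r.
- have -> : (\1_[set: X] : X -> R) = fun _ => 1.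
    by apply/funext => x; rewrite indicE in_setT.
  exact: SS_cst.
- have -> : (\1_set0 : X -> R) = fun _ => 0.
    by apply/funext => x; rewrite indicE in_set0.
  exact: SS_cst.
Qed.

Lemma ind_bigcup n (A : 'I_n -> set X) : (forall i j, i != j -> A i `&` A j = set0) ->
  (\1_(\bigcup_(k in [set: 'I_n]) A k) : X -> R) = fun x => \sum_(k < n) \1_(A k) x.
Proof.
move=> dis; apply/funext => x.
have [[k0 _ xk0]|nx] := pselect ((\bigcup_(k in [set: 'I_n]) A k) x).
- rewrite indicE mem_set; last by exists k0.
  rewrite (bigD1 k0) //= indicE mem_set // big1 ?addr0 // => j jk.
  rewrite indicE memNset //= => xj.
  have : (A k0 `&` A j) x by [].
  by rewrite dis // eq_sym.
- rewrite indicE memNset // big1 // => j _.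
  by rewrite indicE memNset // => xj; apply: nx; exists j.
Qed.

Lemma SS_bnn f : SS f -> bnn f.
Proof.
move=> [c0 [n [c [Bk [h0 [h1 [h2 ->]]]]]]]; split.
  by move=> x; apply: addr_ge0 => //; apply: sumr_ge0 => k _; rewrite mulr_ge0 // indicE ler0n.
exists (c0 + \sum_(k < n) c k) => x; rewrite lerD2l; apply: ler_sum => k _.
by rewrite indicE; case: (_ \in _); rewrite ?mulr1 ?mulr0.
Qed.

End S.

Unset Implicit Arguments.

Lemma sum_lt (R : realType) (N k : nat) : (k <= N)%N ->
  \sum_(j < N) ((j < k)%N%:R : R) = k%:R.
Proof.
move=> kN; rewrite -(big_mkord xpredT (fun j => ((j < k)%N%:R : R))).
rewrite (@big_cat_nat _ _ _ k 0 N xpredT _ (leq0n k) kN) /=.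
rewrite (eq_big_nat _ _ (F2 := fun _ => (1 : R))); last first.
  by move=> i /andP[_ ->].
rewrite sumr_const_nat subn0 [X in _ + X]big1_seq ?addr0 //.
  by move=> i /andP[_]; rewrite mem_index_iota => /andP[ki _]; rewrite ltnNge ki.
Qed.

Theorem proposition4 (R : realType) (X : Type) (B : set (set X)) (g : X -> R) :
  inhabited X ->
  ~ B set0 ->
  bnn g ->
  (forall r : rat, 0 <= r ->
     exists (n : nat) (A : 'I_n -> set X),
       (forall k, B (A k) \/ A k = [set: X] \/ A k = set0) /\
       (forall i j, i != j -> A i `&` A j = set0) /\
       [set x | ratr r <= g x] = \bigcup_(k in [set: 'I_n]) A k) ->
  B_meas B g.
Proof.
move=> [x0] _ hg hlev; split => //.
have [g0 [M hM]] := hg.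
pose K := (Num.truncn M).+1.
have gK x : g x <= K%:R by apply: (le_trans (hM x)); apply/ltW/truncnS_gt.
pose L (m j : nat) := [set x | (j.+1%:R / m.+1%:R : R) <= g x].
have SL m j : SS B (\1_(L m j) : X -> R).
  have r0 : (0 : rat) <= j.+1%:R / m.+1%:R by apply: divr_ge0; apply: ler0n.
  have [n [A [hA [hd heq]]]] := hlev _ r0.
  have -> : L m j = [set x | ratr (j.+1%:R / m.+1%:R) <= g x].
    by rewrite /L fmorph_div /= !ratr_nat.
  by rewrite heq ind_bigcup //; apply: SS_sum => k; apply: SS_ind.
pose gn m x := \sum_(j < m.+1 * K) (m.+1%:R)^-1 * (\1_(L m j) x : R).
exists gn; split.
  move=> m; have S : SS B (gn m).
    by apply: SS_sum => j; apply: SS_scale => //; apply: SL.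
  split; [exact: (SS_bnn S) | exact: S].
have bd m x : `|g x - gn m x| <= harmonic m.
  have p0 : (0 : R) < m.+1%:R by rewrite ltr0n.
  have tp0 : 0 <= g x * m.+1%:R by rewrite mulr_ge0 ?g0 ?ler0n.
  set k := Num.truncn (g x * m.+1%:R).
  have kN : (k <= m.+1 * K)%N.
    rewrite truncn_le_nat; apply: (le_lt_trans (y := (m.+1 * K)%:R)); last by rewrite ltr_nat.
    by rewrite natrM [X in _ <= X]mulrC; apply: ler_wpM2r => //; apply: ler0n.
  have gv : gn m x = k%:R / m.+1%:R.
    rewrite /gn -mulr_sumr mulrC -(@sum_lt R _ _ kN); congr (_ * _); apply: eq_bigr => j _.
    rewrite indicE; congr (_ %:R); congr (nat_of_bool _); rewrite /k truncn_gt_nat -ler_pdivrMr //.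
    case: (boolP (x \in L m j)) => h; first by move/set_mem: h => ->.
    by apply/esym/negbTE; apply: contra h => h; apply: mem_set.
  have /andP[kl ku] := truncn_itv tp0.
  rewrite gv ger0_norm; last by rewrite subr_ge0 ler_pdivrMr.
  rewrite /harmonic /= -[X in _ <= X]div1r ler_pdivlMr // mulrBl divfK ?gt_eqF //.
  by rewrite lerBlDl; apply: ltW; rewrite natr1.
have ne m : [set `|g x - gn m x| | x in [set: X]] !=set0 by exists `|g x0 - gn m x0|, x0.
apply: (@squeeze_cvgr _ _ _ _ (fun=> 0) harmonic); last exact: cvg_harmonic; last exact: cvg_cst.
apply: nearW => n; apply/andP; split.
  apply: (le_trans (normr_ge0 (g x0 - gn n x0))); apply: sup_upper_bound; last by exists x0.
  by split => //; exists (harmonic n) => _ [x _ <-]; apply: bd.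
by apply: ge_sup => // _ [x _ <-]; apply: bd.
Qed.
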